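(* (Completeness) Let $\mathfrak M=(\mathfrak T,\mathcal V)$ be a TFL model and $\phi$ a TFL formula in positive normal form, and let $H_0=(\mathfrak X(s_0),t_\epsilon)$ be the initial process. If $H_0\in[\![\phi]\!]^{\mathfrak T}_{\mathcal V}$, then Eve has a winning strategy in the model-checking game $\mathcal G(H_0,\phi)$.
   Context: Systems: $\mathfrak T=(S,s_0,T,I,\Sigma)$, a transition system with independence (states $S$, initial $s_0$, labels $\Sigma$, transitions $T\subseteq S\times\Sigma\times S$, irreflexive symmetric independence $I\subseteq T\times T$ satisfying the standard TSI axioms), image-finite. For $t=(s,a,s')$: $\sigma(t)=s,\tau(t)=s',\delta(t)=a$. $t\otimes t'$ iff $\sigma(t)=\sigma(t')\wedge tIt'$; $t\ominus t'$ iff $\tau(t)=\sigma(t')\wedge tIt'$; $t\le t'$ iff $\tau(t)=\sigma(t')\wedge\neg tIt'$. $\mathfrak X(s)$ = transitions with source $s$; conflict-free set = set with common source, pairwise $\otimes$; support sets = the $\mathfrak X(s)$ and non-empty conflict-free sets; $M\sqsubseteq R$ iff $M\subseteq R$ and no $t\in R\setminus M$ has $t\otimes t'$ for all $t'\in M$; $\mathcal X$ = all $\mathfrak X(s)$ and all support sets $M\sqsubseteq\mathfrak X(s)$; $\mathfrak A=T\cup\{t_\epsilon\}$ with fresh $t_\epsilon$, $\tau(t_\epsilon)=s_0$, $t_\epsilon\le t$ whenever $\sigma(t)=s_0$, never $t_\epsilon\ominus t$; processes $\mathfrak S=\mathcal X\times\mathfrak A$. TFL: formulas $\phi::=Z\mid\neg\phi\mid\phi\wedge\phi\mid\langle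 a\rangle_c\phi\mid\langle a\rangle_{nc}\phi\mid\langle\otimes\rangle\phi\mid\mu Z.\phi$ (free occurrences of $Z$ in $\mu Z.\phi$ under an even number of negations), with duals $\vee$, $[a]_c=\neg\langle a\rangle_c\neg$, $[a]_{nc}$, $[\otimes]=\neg\langle\otimes\rangle\neg$, $\nu Z.\phi=\neg\mu Z.\neg\phi[\neg Z/Z]$. A model is $(\mathfrak T,\mathcal V)$ with $\mathcal V:\mathrm{Var}\to2^{\mathfrak S}$. Semantics in $2^{\mathfrak S}$: $[\![Z]\!]=\mathcal V(Z)$, $\neg$ complement, $\wedge$ intersection, $[\![\langle a\rangle_c\phi]\!]=\{(R,t):\exists r\in R.\ \delta(r)=a,\ t\le r,\ (\mathfrak X(\tau(r)),r)\in[\![\phi]\!]\}$, $\langle a\rangle_{nc}$ likewise with $t\ominus r$, $[\![\langle\otimes\rangle\phi]\!]=\{(R,t):\exists M\in\mathcal X.\ M\sqsubseteq R,\ (M,t)\in[\![\phi]\!]\}$, $[\![\mu Z.\phi]\!]_{\mathcal V}=\bigcap\{Q\subseteq\mathfrak S:[\![\phi]\!]_{\mathcal V[Z:=Q]}\subseteq Q\}$. Positive normal form: negation only on variables, no two binders bind the same variable. $Sub(\phi)$ is the set of subformulas. Model-checking game $\mathcal G(H_0,\phi)$ between Eve and Adam: configurations $H\vdash\psi$ with $H\in\mathfrak S$, $\psi\in Sub(\phi)$; start $H_0\vdash\phi$. Rules: $H\vdash\mu Z.\psi$ or $H\vdash\nu Z.\psi$ moves to $H\vdash Z$; $H\vdash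 Z$ with $Z$ bound by $\mu Z.\psi$ or $\nu Z.\psi$ moves to $H\vdash\psi$; at $H\vdash\psi_0\vee\psi_1$ Eve (at $\wedge$, Adam) chooses $H\vdash\psi_i$; at $(R,t)\vdash\langle a\rangle_c\psi$ Eve (at $[a]_c\psi$, Adam) chooses $r\in R$ with $\delta(r)=a$, $t\le r$, moving to $(\mathfrak X(\tau(r)),r)\vdash\psi$; same for $\langle a\rangle_{nc}$/$[a]_{nc}$ with $t\ominus r$; at $(R,t)\vdash\langle\otimes\rangle\psi$ Eve (at $[\otimes]\psi$, Adam) chooses $M\in\mathcal X$ with $M\sqsubseteq R$, moving to $(M,t)\vdash\psi$. Adam wins a play iff it ends at $H\vdash Z$ ($Z$ free) with $H\notin\mathcal V(Z)$, or at a diamond configuration ($\langle a\rangle_c$, $\langle a\rangle_{nc}$, $\langle\otimes\rangle$) with no available choice, or is infinite and the syntactically outermost variable occurring infinitely often is bound by a $\mu$; Eve wins dually (ends at $H\vdash Z$ with $H\in\mathcal V(Z)$, at a box configuration with no available choice, or infinite with the outermost infinitely-often variable bound by a $\nu$). A player has a winning strategy if she/he can guarantee winning every play. *)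

(* Defs.v *)
From Stdlib Require Import List Relations Arith.
Import ListNotations.


Record trans (S L : Type) := mkTr { src : S; lbl : L; tgt : S }.
Arguments mkTr {S L}.
Arguments src {S L}.
Arguments lbl {S L}.
Arguments tgt {S L}.

Record TS := mkTS {
  St  : Type;
  s0  : St;
  Lab : Type;
  Tr  : trans St Lab -> Prop;
  Ind : trans St Lab -> trans St Lab -> Prop }.

Notation Trans M := (trans (St M) (Lab M)).

Definition sim_step (M : TS) (t t' : Trans M) : Prop :=
  exists s a s1 s2 u b,
    t = mkTr s a s1 /\ t' = mkTr s2 a u /\
    Ind M (mkTr s a s1) (mkTr s b s2) /\
    Ind M (mkTr s a s1) (mkTr s1 b u) /\
    Ind M (mkTr s b s2) (mkTr s2 a u).

Definition sim (M : TS) : relation (Trans M) :=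
  clos_refl_sym_trans _ (@sim_step M).

Definition TSI_axioms (M : TS) : Prop :=
  (forall t t', Ind M t t' -> Tr M t /\ Tr M t') /\
  (forall t, ~ Ind M t t) /\
  (forall t t', Ind M t t' -> Ind M t' t) /\
  (forall s a s1 s2, sim M (mkTr s a s1) (mkTr s a s2) -> s1 = s2) /\
  (forall s a b s1 s2, Ind M (mkTr s a s1) (mkTr s b s2) ->
     exists u, Ind M (mkTr s a s1) (mkTr s1 b u) /\ Ind M (mkTr s b s2) (mkTr s2 a u)) /\
  (forall s a b s1 u, Ind M (mkTr s a s1) (mkTr s1 b u) ->
     exists s2, Ind M (mkTr s a s1) (mkTr s b s2) /\ Ind M (mkTr s b s2) (mkTr s2 a u)) /\
  (forall t t' w, sim M t t' -> Ind M t' w -> Ind M t w).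

Definition image_finite (M : TS) : Prop :=
  forall (s : St M) (a : Lab M), exists l : list (St M),
    forall s', Tr M (mkTr s a s') -> In s' l.

Definition otimes {M : TS} (t t' : Trans M) : Prop := src t = src t' /\ Ind M t t'.

Definition Xs {M : TS} (s : St M) : Trans M -> Prop := fun t => Tr M t /\ src t = s.

Definition conflict_free {M : TS} (R : Trans M -> Prop) : Prop :=
  (forall t, R t -> Tr M t) /\
  (exists s, forall t, R t -> src t = s) /\
  (forall t t', R t -> R t' -> t <> t' -> otimes t t').

Definition support_set {M : TS} (R : Trans M -> Prop) : Prop :=
  (exists s, forall t, R t <-> Xs s t) \/ (conflict_free R /\ exists t, R t).

Definition sqsub {M : TS} (Ms R : Trans M -> Prop) : Prop :=
  (forall t, Ms t -> R t) /\
  ~ (exists t, R t /\ ~ Ms t /\ forall t', Ms t' -> otimes t t').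

Definition inX {M : TS} (R : Trans M -> Prop) : Prop :=
  (exists s, forall t, R t <-> Xs s t) \/
  (support_set R /\ exists s, sqsub R (Xs s)).

Inductive ext (M : TS) := teps | etr (t : Trans M).
Arguments teps {M}.
Arguments etr {M} t.

Definition ext_ok {M : TS} (e : ext M) : Prop :=
  match e with teps => True | etr t => Tr M t end.

Definition le_ext {M : TS} (e : ext M) (r : Trans M) : Prop :=
  match e with
  | teps => src r = s0 M
  | etr t => tgt t = src r /\ ~ Ind M t r
  end.

Definition om_ext {M : TS} (e : ext M) (r : Trans M) : Prop :=
  match e with
  | teps => False
  | etr t => tgt t = src r /\ Ind M t r
  end.

Record Proc (M : TS) := mkProc {
  pR : Trans M -> Prop;
  pt : ext M;
  pR_ok : @inX M pR;
  pt_ok : @ext_ok M pt }.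
Arguments pR {M} _ _.
Arguments pt {M} _.
Arguments mkProc {M} _ _ _ _.

Lemma Xs_inX (M : TS) (s : St M) : inX (Xs s).
Proof. left; exists s; tauto. Qed.

Definition succP {M : TS} (r : Trans M) (hr : Tr M r) : Proc M :=
  mkProc (Xs (tgt r)) (etr r) (Xs_inX M (tgt r)) hr.

Definition H0 (M : TS) : Proc M :=
  mkProc (Xs (s0 M)) teps (Xs_inX M (s0 M)) I.

Inductive form (L : Type) :=
| fvar  (Z : nat)
| fneg  (a : form L)
| fand  (a b : form L)
| f_or  (a b : form L)
| fdiac (x : L) (a : form L)
| fboxc (x : L) (a : form L)
| fdianc (x : L) (a : form L)
| fboxnc (x : L) (a : form L)
| fdiao (a : form L)
| fboxo (a : form L)
| fmu (Z : nat) (a : form L)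
| fnu (Z : nat) (a : form L).
Arguments fvar {L} Z.
Arguments fneg {L}.
Arguments fand {L}.
Arguments f_or {L}.
Arguments fdiac {L}.
Arguments fboxc {L}.
Arguments fdianc {L}.
Arguments fboxnc {L}.
Arguments fdiao {L}.
Arguments fboxo {L}.
Arguments fmu {L}.
Arguments fnu {L}.

Definition upd {M : TS} (V : nat -> Proc M -> Prop) (Z : nat) (Q : Proc M -> Prop)
  : nat -> Proc M -> Prop :=
  fun Y => if Nat.eqb Y Z then Q else V Y.

Definition dia_c {M : TS} (P : Proc M -> Prop) (x : Lab M) (H : Proc M) : Prop :=
  exists r (hr : Tr M r), pR H r /\ lbl r = x /\ le_ext (pt H) r /\ P (succP r hr).

Definition dia_nc {M : TS} (P : Proc M -> Prop) (x : Lab M) (H : Proc M) : Prop :=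
  exists r (hr : Tr M r), pR H r /\ lbl r = x /\ om_ext (pt H) r /\ P (succP r hr).

Definition dia_o {M : TS} (P : Proc M -> Prop) (H : Proc M) : Prop :=
  exists H' : Proc M, pt H' = pt H /\ sqsub (pR H') (pR H) /\ P H'.

(* [[phi]]_V ; derived operators by their defining dualities *)
Fixpoint sem {M : TS} (V : nat -> Proc M -> Prop) (phi : form (Lab M)) {struct phi}
  : Proc M -> Prop :=
  match phi with
  | fvar Z => V Z
  | fneg a => fun H => ~ sem V a H
  | fand a b => fun H => sem V a H /\ sem V b H
  | f_or a b => fun H => ~ (~ sem V a H /\ ~ sem V b H)
  | fdiac x a => dia_c (sem V a) x
  | fboxc x a => fun H => ~ dia_c (fun H' => ~ sem V a H') x H
  | fdianc x a => dia_nc (sem V a) x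
  | fboxnc x a => fun H => ~ dia_nc (fun H' => ~ sem V a H') x H
  | fdiao a => dia_o (sem V a)
  | fboxo a => fun H => ~ dia_o (fun H' => ~ sem V a H') H
  | fmu Z a => fun H =>
      forall Q : Proc M -> Prop, (forall H', sem (upd V Z Q) a H' -> Q H') -> Q H
  | fnu Z a => fun H =>   (* nu Z.a := ~ mu Z. ~ a[~Z/Z] *)
      ~ (forall Q : Proc M -> Prop,
           (forall H', ~ sem (upd V Z (fun x => ~ Q x)) a H' -> Q H') -> Q H)
  end.

Definition children {L : Type} (phi : form L) : list (form L) :=
  match phi with
  | fvar _ => []
  | fneg a | fdiac _ a | fboxc _ a | fdianc _ a | fboxnc _ a
  | fdiao a | fboxo a | fmu _ a | fnu _ a => [a]
  | fand a b | f_or a b => [a; b]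
  end.

Inductive subf {L : Type} (psi : form L) : form L -> Prop :=
| subf_refl : subf psi psi
| subf_step : forall phi c, In c (children phi) -> subf psi c -> subf psi phi.

Fixpoint bv {L : Type} (phi : form L) : list nat :=
  match phi with
  | fvar _ => []
  | fneg a | fdiac _ a | fboxc _ a | fdianc _ a | fboxnc _ a
  | fdiao a | fboxo a => bv a
  | fand a b | f_or a b => bv a ++ bv b
  | fmu Z a | fnu Z a => Z :: bv a
  end.

Fixpoint occurs_free {L : Type} (Z : nat) (phi : form L) : Prop :=
  match phi with
  | fvar Y => Y = Z
  | fneg a | fdiac _ a | fboxc _ a | fdianc _ a | fboxnc _ a
  | fdiao a | fboxo a => occurs_free Z a
  | fand a b | f_or a b => occurs_free Z a \/ occurs_free Z b
  | fmu Y a | fnu Y a => Y <> Z /\ occurs_free Z a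
  end.

(* positive normal form (with the formation condition on binders and the
   convention that bound variables do not also occur free) *)
Definition pnf {L : Type} (phi : form L) : Prop :=
  (forall psi, subf (fneg psi) phi -> exists Z, psi = fvar Z) /\
  NoDup (bv phi) /\
  (forall Z, In Z (bv phi) -> ~ occurs_free Z phi /\ ~ subf (fneg (fvar Z)) phi).

Definition conf (M : TS) : Type := (Proc M * form (Lab M))%type.

Definition move {M : TS} (phi : form (Lab M)) (c c' : conf M) : Prop :=
  match c with
  | (H, psi) =>
    match psi with
    | fvar Z => exists B, (subf (fmu Z B) phi \/ subf (fnu Z B) phi) /\ c' = (H, B)
    | fneg _ => False
    | fand a b | f_or a b => c' = (H, a) \/ c' = (H, b)
    | fdiac x a | fboxc x a =>
        exists r (hr : Tr M r), pR H r /\ lbl r = x /\ le_ext (pt H) r /\ c' = (succP r hr, a)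
    | fdianc x a | fboxnc x a =>
        exists r (hr : Tr M r), pR H r /\ lbl r = x /\ om_ext (pt H) r /\ c' = (succP r hr, a)
    | fdiao a | fboxo a =>
        exists H' : Proc M, pt H' = pt H /\ sqsub (pR H') (pR H) /\ c' = (H', a)
    | fmu Z _ | fnu Z _ => c' = (H, fvar Z)
    end
  end.

Definition eve_pos {M : TS} (c : conf M) : Prop :=
  match snd c with
  | f_or _ _ | fdiac _ _ | fdianc _ _ | fdiao _ => True
  | _ => False
  end.

Definition eve_wins_end {M : TS} (V : nat -> Proc M -> Prop) (c : conf M) : Prop :=
  match c with
  | (H, fvar Z) => V Z H
  | (H, fneg (fvar Z)) => ~ V Z H
  | (_, fboxc _ _) | (_, fboxnc _ _) | (_, fboxo _) => True
  | _ => False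
  end.

Definition inf_often {M : TS} (pi : nat -> conf M) (Z : nat) : Prop :=
  forall N, exists n, N <= n /\ snd (pi n) = fvar Z.

Definition binder_of {L : Type} (phi : form L) (Z : nat) (B : form L) : Prop :=
  subf B phi /\ exists psi, B = fmu Z psi \/ B = fnu Z psi.

(* Eve wins an infinite play: the outermost variable occurring infinitely
   often is bound by a nu *)
Definition eve_wins_inf {M : TS} (phi : form (Lab M)) (pi : nat -> conf M) : Prop :=
  exists Z psi, inf_often pi Z /\ subf (fnu Z psi) phi /\
    forall Y, inf_often pi Y -> exists BY, binder_of phi Y BY /\ subf BY (fnu Z psi).

Definition hist {M : TS} (pi : nat -> conf M) (i : nat) : list (conf M) :=
  map pi (seq 0 i).

Definition eve_has_winning_strategy {M : TS} (V : nat -> Proc M -> Prop)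
  (phi : form (Lab M)) (c0 : conf M) : Prop :=
  exists sigma : list (conf M) -> conf M -> conf M,
    (forall h c, eve_pos c -> (exists c', move phi c c') -> move phi c (sigma h c)) /\
    (forall (pi : nat -> conf M) (n : nat),
        pi 0 = c0 ->
        (forall i, i < n -> move phi (pi i) (pi (S i))) ->
        (forall i, i < n -> eve_pos (pi i) -> pi (S i) = sigma (hist pi i) (pi i)) ->
        (forall c', ~ move phi (pi n) c') ->
        eve_wins_end V (pi n)) /\
    (forall pi : nat -> conf M,
        pi 0 = c0 ->
        (forall i, move phi (pi i) (pi (S i))) ->
        (forall i, eve_pos (pi i) -> pi (S i) = sigma (hist pi i) (pi i)) ->
        eve_wins_inf phi pi).

(* Main.v *)
Require Import Defs.
From Stdlib Require Import List Relations Arith Lia Classical ClassicalEpsilon FunctionalExtensionality.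
Import ListNotations.

Section Game.
Variable C : Type.
Variable mv : C -> C -> Prop.
Variable eve : C -> Prop.
Variable endwin : C -> Prop.
Variable infwin : (nat -> C) -> Prop.
Hypothesis infwin_tail : forall pi k, infwin (fun i => pi (k + i)) -> infwin pi.

Definition ghist (pi : nat -> C) i := map pi (seq 0 i).
Definition strat := list C -> C -> C.
Definition legal (s : strat) := forall h c, eve c -> (exists c', mv c c') -> mv c (s h c).
Definition gcons (s : strat) pi n :=
  (forall i, i < n -> mv (pi i) (pi (S i))) /\
  (forall i, i < n -> eve (pi i) -> pi (S i) = s (ghist pi i) (pi i)).
Definition icons (s : strat) pi :=
  (forall i, mv (pi i) (pi (S i))) /\
  (forall i, eve (pi i) -> pi (S i) = s (ghist pi i) (pi i)).

Definition wins (T Ok : C -> Prop) (s : strat) c0 := legal s /\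
  (forall pi n, pi 0 = c0 -> gcons s pi n -> (forall i, i < n -> ~ T (pi i)) -> T (pi n) -> Ok (pi n)) /\
  (forall pi n, pi 0 = c0 -> gcons s pi n -> (forall i, i <= n -> ~ T (pi i)) ->
      (forall c', ~ mv (pi n) c') -> endwin (pi n)) /\
  (forall pi, pi 0 = c0 -> icons s pi -> (forall i, ~ T (pi i)) -> infwin pi).

Definition Good T Ok c0 := exists s, wins T Ok s c0.

Definition fb : strat := fun h c =>
  match excluded_middle_informative (exists c', mv c c') with
  | left H => proj1_sig (constructive_indefinite_description _ H)
  | right _ => c end.

Lemma fb_legal : legal fb.
Proof.
  intros h c _ Hm. unfold fb. destruct excluded_middle_informative as [H|H]; [|tauto].
  exact (proj2_sig (constructive_indefinite_description _ H)).
Qed.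

Definition pick T Ok c : strat :=
  epsilon (inhabits fb) (fun s => legal s /\ (Good T Ok c -> wins T Ok s c)).

Lemma pick_spec T Ok c : legal (pick T Ok c) /\ (Good T Ok c -> wins T Ok (pick T Ok c) c).
Proof.
  unfold pick. apply epsilon_spec.
  destruct (classic (Good T Ok c)) as [[s Hs]|Hn].
  - exists s. split; [apply Hs|auto].
  - exists fb. split; [apply fb_legal|tauto].
Qed.

Definition shift (pi : nat -> C) k := fun i => pi (k + i).

Lemma map_seq_shift (pi : nat -> C) k n s :
  map (fun i => pi (k + i)) (seq s n) = map pi (seq (k + s) n).
Proof.
  revert s; induction n; intros s; simpl; auto. rewrite IHn. replace (k + S s) with (S (k + s)) by lia. reflexivity.
Qed.

Lemma ghist_split pi k i : ghist pi (k + i) = ghist pi k ++ ghist (shift pi k) i.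
Proof.
  unfold ghist, shift. rewrite seq_app, map_app. f_equal.
  rewrite map_seq_shift. f_equal. f_equal. lia.
Qed.

Lemma ghist_len pi i : length (ghist pi i) = i.
Proof. unfold ghist. rewrite length_map, length_seq. auto. Qed.

Lemma drop_ghist pi k i : k <= i -> skipn k (ghist pi i) = ghist (shift pi k) (i - k).
Proof.
  intros Hk. replace i with (k + (i - k)) at 1 by lia.
  rewrite ghist_split. rewrite skipn_app, ghist_len.
  replace (k - k) with 0 by lia. rewrite skipn_all2 by (rewrite ghist_len; lia). reflexivity.
Qed.

Lemma ghist_S pi i : ghist pi (S i) = ghist pi i ++ [pi i].
Proof. unfold ghist. rewrite seq_S, map_app. reflexivity. Qed.

Lemma nth_ghist pi i k d : k < i -> nth k (ghist pi i) d = pi k.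
Proof.
  intros Hk. unfold ghist. rewrite nth_indep with (d' := pi 0) by (rewrite length_map, length_seq; lia).
  rewrite map_nth, seq_nth by lia. reflexivity.
Qed.

Definition dec (P : Prop) : bool := if excluded_middle_informative P then true else false.
Lemma dec_t (P : Prop) : P -> dec P = true.
Proof. unfold dec; destruct excluded_middle_informative; tauto. Qed.
Lemma dec_f (P : Prop) : ~ P -> dec P = false.
Proof. unfold dec; destruct excluded_middle_informative; tauto. Qed.

Fixpoint firstidx (P : C -> Prop) (l : list C) : option nat :=
  match l with
  | [] => None
  | x :: l' => if dec (P x) then Some 0 else option_map S (firstidx P l')
  end.

Fixpoint lastidx (P : C -> Prop) (l : list C) : option nat :=
  match l with
  | [] => None
  | x :: l' => match lastidx P l' with
               | Some k => Some (S k)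
               | None => if dec (P x) then Some 0 else None end
  end.

Lemma fi_none P (pi : nat -> C) s n :
  (forall i, s <= i < s + n -> ~ P (pi i)) -> firstidx P (map pi (seq s n)) = None.
Proof.
  revert s; induction n; intros s H; simpl; auto.
  rewrite dec_f by (apply H; lia). rewrite IHn; auto. intros; apply H; lia.
Qed.

Lemma fi_some P (pi : nat -> C) s n k : k < n -> P (pi (s + k)) ->
  (forall j, j < k -> ~ P (pi (s + j))) -> firstidx P (map pi (seq s n)) = Some k.
Proof.
  revert s k; induction n; intros s k Hk HP Hn; [lia|]. simpl.
  destruct k.
  - rewrite dec_t; auto. rewrite Nat.add_0_r in HP; auto.
  - rewrite dec_f by (specialize (Hn 0); rewrite Nat.add_0_r in Hn; apply Hn; lia).
    rewrite (IHn (S s) k); auto; try lia.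
    + replace (S s + k) with (s + S k) by lia; auto.
    + intros j Hj. replace (S s + j) with (s + S j) by lia. apply Hn; lia.
Qed.

Lemma li_none P (pi : nat -> C) s n :
  (forall i, s <= i < s + n -> ~ P (pi i)) -> lastidx P (map pi (seq s n)) = None.
Proof.
  revert s; induction n; intros s H; simpl; auto.
  rewrite IHn by (intros; apply H; lia). rewrite dec_f by (apply H; lia). auto.
Qed.

Lemma li_some P (pi : nat -> C) s n k : k < n -> P (pi (s + k)) ->
  (forall j, k < j < n -> ~ P (pi (s + j))) -> lastidx P (map pi (seq s n)) = Some k.
Proof.
  revert s k; induction n; intros s k Hk HP Hn; [lia|]. simpl.
  destruct k.
  - rewrite li_none. rewrite dec_t; auto. rewrite Nat.add_0_r in HP; auto.
    intros i Hi. replace i with (s + (i - s)) by lia. apply Hn; lia.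
  - rewrite (IHn (S s) k); auto; try lia.
    + replace (S s + k) with (s + S k) by lia; auto.
    + intros j Hj. replace (S s + j) with (s + S j) by lia. apply Hn; lia.
Qed.

Lemma min_idx (P : nat -> Prop) n : P n -> exists m, P m /\ m <= n /\ forall k, k < m -> ~ P k.
Proof.
  revert P. induction n; intros P HP.
  - exists 0; split; auto. split; auto. intros; lia.
  - destruct (classic (P 0)) as [H0|H0].
    + exists 0. split; auto. split; [lia|]. intros; lia.
    + destruct (IHn (fun k => P (S k)) HP) as [m [Hm [Hmn Hmin]]].
      exists (S m). split; auto. split; [lia|]. intros k Hk. destruct k; auto.
      apply Hmin; lia.
Qed.

Lemma last_idx (P : nat -> Prop) n : P 0 -> exists j, j <= n /\ P j /\ forall i, j < i <= n -> ~ P i.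
Proof.
  induction n; intros H0.
  - exists 0. split; auto. split; auto. intros; lia.
  - destruct (classic (P (S n))) as [H|H].
    + exists (S n). split; auto. split; auto. intros; lia.
    + destruct IHn as [j [Hj [HPj Hl]]]; auto. exists j. split; [lia|]. split; auto.
      intros i Hi. destruct (Nat.eq_dec i (S n)); [subst; auto|]. apply Hl; lia.
Qed.

Lemma good_tgt T Ok c0 : T c0 -> Ok c0 -> Good T Ok c0.
Proof.
  intros HT HO. exists fb. split; [apply fb_legal|]. split; [|split].
  - intros pi n H0 _ Hn HTn. destruct n; [congruence|]. exfalso; apply (Hn 0); [lia|congruence].
  - intros pi n H0 _ Hn _. exfalso; apply (Hn 0); [lia|congruence].
  - intros pi H0 _ Hn. exfalso; apply (Hn 0); congruence.
Qed.

Definition afterS (c0 m : C) (tau : C -> strat) : strat := fun h c =>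
  match h with
  | [] => if dec (c = c0) then m else tau c [] c
  | _ :: h' => tau (hd c h') h' c
  end.

Lemma afterS_legal c0 m tau : (eve c0 -> (exists c', mv c0 c') -> mv c0 m) ->
  (forall c, legal (tau c)) -> legal (afterS c0 m tau).
Proof.
  intros Hm Ht h c He Hx. unfold afterS. destruct h.
  - unfold dec; destruct excluded_middle_informative; [subst; auto|]. apply Ht; auto.
  - apply Ht; auto.
Qed.

Lemma ghist_S0 pi j : ghist pi (S j) = pi 0 :: ghist (shift pi 1) j.
Proof. apply (ghist_split pi 1 j). Qed.

Lemma afterS_step c0 m tau pi j : eve (pi (S j)) ->
  afterS c0 m tau (ghist pi (S j)) (pi (S j)) = tau (pi 1) (ghist (shift pi 1) j) (shift pi 1 j).
Proof.
  intros _. rewrite ghist_S0. simpl. f_equal.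
  destruct j; simpl; auto.
Qed.

Lemma afterS_cons c0 m tau pi n : gcons (afterS c0 m tau) pi (S n) ->
  gcons (tau (pi 1)) (shift pi 1) n.
Proof.
  intros [Hm Hs]. split.
  - intros i Hi. apply (Hm (S i)); lia.
  - intros i Hi He. unfold shift at 1. simpl. rewrite (Hs (S i)) by (auto; lia).
    rewrite afterS_step; auto.
Qed.

Lemma afterS_icons c0 m tau pi : icons (afterS c0 m tau) pi -> icons (tau (pi 1)) (shift pi 1).
Proof.
  intros [Hm Hs]. split.
  - intros i. apply (Hm (S i)).
  - intros i He. unfold shift at 1. simpl. rewrite (Hs (S i)) by auto.
    rewrite afterS_step; auto.
Qed.

Lemma shift_shift pi a b : shift (shift pi a) b = shift pi (a + b).
Proof. apply functional_extensionality; intros i; unfold shift; f_equal; lia. Qed.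

Lemma good_step T Ok c0 : ~ T c0 ->
  (eve c0 -> exists c1, mv c0 c1 /\ Good T Ok c1) ->
  (~ eve c0 -> forall c1, mv c0 c1 -> Good T Ok c1) ->
  ((forall c', ~ mv c0 c') -> endwin c0) -> Good T Ok c0.
Proof.
  intros HT He Ha Hend.
  set (m := epsilon (inhabits c0) (fun c1 => mv c0 c1 /\ Good T Ok c1)).
  assert (Hmspec : eve c0 -> mv c0 m /\ Good T Ok m).
  { intros H. apply (epsilon_spec (inhabits c0) (fun c1 => mv c0 c1 /\ Good T Ok c1)). auto. }
  exists (afterS c0 m (pick T Ok)).
  assert (Hgood1 : forall pi n, pi 0 = c0 -> gcons (afterS c0 m (pick T Ok)) pi (S n) -> Good T Ok (pi 1)).
  { intros pi n H0 [Hm Hs]. destruct (classic (eve c0)) as [E|E].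
    - rewrite (Hs 0) by (subst; auto; lia). rewrite H0. simpl. rewrite dec_t by auto. exact (proj2 (Hmspec E)).
    - apply Ha; auto. rewrite <- H0. apply Hm; lia. }
  assert (Hgood1' : forall pi, pi 0 = c0 -> icons (afterS c0 m (pick T Ok)) pi -> Good T Ok (pi 1)).
  { intros pi H0 [Hm Hs]. destruct (classic (eve c0)) as [E|E].
    - rewrite (Hs 0) by (subst; auto). rewrite H0. simpl. rewrite dec_t by auto. exact (proj2 (Hmspec E)).
    - apply Ha; auto. rewrite <- H0. apply Hm. }
  split; [|split; [|split]].
  - apply afterS_legal; [intros E _; exact (proj1 (Hmspec E))|]. intros c; exact (proj1 (pick_spec T Ok c)).
  - intros pi n H0 Hc Hn HTn. destruct n; [subst; tauto|].
    destruct (proj2 (pick_spec T Ok (pi 1)) (Hgood1 pi n H0 Hc)) as [_ [W _]].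
    apply (W (shift pi 1) n); auto. apply afterS_cons in Hc; auto.
    intros i Hi. apply (Hn (1 + i)); lia.
  - intros pi n H0 Hc Hn Hmv. destruct n; [subst; auto|].
    destruct (proj2 (pick_spec T Ok (pi 1)) (Hgood1 pi n H0 Hc)) as [_ [_ [W _]]].
    apply (W (shift pi 1) n); auto. apply afterS_cons in Hc; auto.
    intros i Hi. apply (Hn (1 + i)); lia.
  - intros pi H0 Hc Hn.
    destruct (proj2 (pick_spec T Ok (pi 1)) (Hgood1' pi H0 Hc)) as [_ [_ [_ W]]].
    apply (infwin_tail pi 1). apply (W (shift pi 1)); auto. apply afterS_icons in Hc; auto.
    intros i. apply (Hn (1 + i)).
Qed.


Lemma icons_gcons s pi n : icons s pi -> gcons s pi n.
Proof. intros [H1 H2]; split; intros; auto. Qed.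

Lemma shift0 pi k : shift pi k 0 = pi k.
Proof. unfold shift; f_equal; lia. Qed.

Definition swS (T2 : C -> Prop) (s2 : strat) (tau : C -> strat) : strat := fun h c =>
  match firstidx T2 (h ++ [c]) with
  | None => s2 h c
  | Some k => tau (nth k (h ++ [c]) c) (skipn k h) c
  end.

Lemma swS_legal T2 s2 tau : legal s2 -> (forall c, legal (tau c)) -> legal (swS T2 s2 tau).
Proof. intros H1 H2 h c He Hx. unfold swS. destruct firstidx; auto. apply H2; auto. Qed.

Lemma swS_pre T2 s2 tau pi i : (forall j, j <= i -> ~ T2 (pi j)) ->
  swS T2 s2 tau (ghist pi i) (pi i) = s2 (ghist pi i) (pi i).
Proof.
  intros H. unfold swS. rewrite <- ghist_S. unfold ghist. rewrite fi_none; auto.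
  intros j Hj; apply H; lia.
Qed.

Lemma swS_post T2 s2 tau pi i k : k <= i -> T2 (pi k) -> (forall j, j < k -> ~ T2 (pi j)) ->
  swS T2 s2 tau (ghist pi i) (pi i) = tau (pi k) (ghist (shift pi k) (i - k)) (shift pi k (i - k)).
Proof.
  intros Hk HT Hn. unfold swS. rewrite <- ghist_S. unfold ghist at 1.
  rewrite (fi_some _ _ 0 (S i) k); auto; try lia.
  rewrite nth_ghist by lia. rewrite drop_ghist by lia. unfold shift at 3. f_equal. f_equal. lia.
Qed.

Lemma sw_cons_pre T2 s2 tau pi n m : gcons (swS T2 s2 tau) pi n -> m <= n ->
  (forall i, i < m -> ~ T2 (pi i)) -> gcons s2 pi m.
Proof.
  intros [H1 H2] Hm Hn. split; intros i Hi; [apply H1; lia|].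
  intros He. rewrite H2 by (auto; lia). apply swS_pre. intros; apply Hn; lia.
Qed.

Lemma sw_icons_pre T2 s2 tau pi : icons (swS T2 s2 tau) pi ->
  (forall i, ~ T2 (pi i)) -> icons s2 pi.
Proof.
  intros [H1 H2] Hn. split; intros i; [apply H1|].
  intros He. rewrite H2 by auto. apply swS_pre. intros; apply Hn.
Qed.

Lemma sw_cons_post T2 s2 tau pi n k : gcons (swS T2 s2 tau) pi n -> k <= n -> T2 (pi k) ->
  (forall i, i < k -> ~ T2 (pi i)) -> gcons (tau (pi k)) (shift pi k) (n - k).
Proof.
  intros [H1 H2] Hk HT Hn. split; intros i Hi.
  - unfold shift. replace (k + S i) with (S (k + i)) by lia. apply H1; lia.
  - intros He. unfold shift at 1. replace (k + S i) with (S (k + i)) by lia.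
    rewrite H2 by (auto; lia). rewrite (swS_post _ _ _ _ _ k); auto; try lia.
    replace (k + i - k) with i by lia. reflexivity.
Qed.

Lemma sw_icons_post T2 s2 tau pi k : icons (swS T2 s2 tau) pi -> T2 (pi k) ->
  (forall i, i < k -> ~ T2 (pi i)) -> icons (tau (pi k)) (shift pi k).
Proof.
  intros [H1 H2] HT Hn. split; intros i.
  - unfold shift. replace (k + S i) with (S (k + i)) by lia. apply H1.
  - intros He. unfold shift at 1. replace (k + S i) with (S (k + i)) by lia.
    rewrite H2 by auto. rewrite (swS_post _ _ _ _ _ k); auto; try lia.
    replace (k + i - k) with i by lia. reflexivity.
Qed.

Lemma good_switch T1 Ok1 T2 Ok2 c0 : (forall c, T1 c -> T2 c) -> Good T2 Ok2 c0 ->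
  (forall c, T2 c -> Ok2 c -> Good T1 Ok1 c) -> Good T1 Ok1 c0.
Proof.
  intros Hsub [s2 [Hl2 [Hw1 [Hw2 Hw3]]]] Hsw.
  set (tau := pick T1 Ok1).
  exists (swS T2 s2 tau).
  assert (Hk : forall pi k, pi 0 = c0 -> gcons s2 pi k -> T2 (pi k) ->
     (forall i, i < k -> ~ T2 (pi i)) -> wins T1 Ok1 (tau (pi k)) (pi k)).
  { intros pi k H0 Hc HT Hn. apply (proj2 (pick_spec T1 Ok1 (pi k))). apply Hsw; auto. }
  split; [|split; [|split]].
  - apply swS_legal; auto. intros c; exact (proj1 (pick_spec T1 Ok1 c)).
  - intros pi n H0 Hc Hn HTn.
    destruct (min_idx (fun i => T2 (pi i)) n) as [k [HTk [Hkn Hmin]]]; auto.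
    destruct (Hk pi k H0) as [_ [W _]]; auto.
    { apply (sw_cons_pre T2 s2 tau pi n k); auto. }
    specialize (W (shift pi k) (n - k) (shift0 pi k)). unfold shift in W.
    replace (k + (n - k)) with n in W by lia. apply W; auto.
    + apply (sw_cons_post T2 s2 tau pi n k); auto.
    + intros i Hi; apply Hn; lia.
  - intros pi n H0 Hc Hn Hmv.
    destruct (classic (exists k, k <= n /\ T2 (pi k))) as [[k0 [Hk0 HT0]]|HnT].
    + destruct (min_idx (fun i => T2 (pi i)) k0) as [k [HTk [Hkn Hmin]]]; auto.
      destruct (Hk pi k H0) as [_ [_ [W _]]]; auto.
      { apply (sw_cons_pre T2 s2 tau pi n k); auto; lia. }
      specialize (W (shift pi k) (n - k) (shift0 pi k)). unfold shift in W.
      replace (k + (n - k)) with n in W by lia. apply W; auto.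
      * apply (sw_cons_post T2 s2 tau pi n k); auto; lia.
      * intros i Hi; apply Hn; lia.
    + apply (Hw2 pi n); auto.
      * apply (sw_cons_pre T2 s2 tau pi n n); auto. intros i Hi HT; apply HnT; exists i; split; auto; lia.
      * intros i Hi HT; apply HnT; exists i; split; auto.
  - intros pi H0 Hc Hn.
    destruct (classic (exists k, T2 (pi k))) as [[k0 HT0]|HnT].
    + destruct (min_idx (fun i => T2 (pi i)) k0) as [k [HTk [Hkn Hmin]]]; auto.
      destruct (Hk pi k H0) as [_ [_ [_ W]]]; auto.
      { apply (sw_cons_pre T2 s2 tau pi k k); auto. apply icons_gcons; auto. }
      apply (infwin_tail pi k). apply (W (shift pi k)); [apply shift0| |].
      * apply (sw_icons_post T2 s2 tau pi k); auto.
      * intros i; apply Hn.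
    + assert (HnT' : forall i, ~ T2 (pi i)) by (intros i HT; apply HnT; eauto).
      apply Hw3; auto. apply (sw_icons_pre T2 s2 tau); auto.
Qed.

Definition rsS (R : C -> Prop) (rho : C -> strat) : strat := fun h c =>
  match lastidx R (h ++ [c]) with
  | None => fb h c
  | Some j => rho (nth j (h ++ [c]) c) (skipn j h) c
  end.

Lemma rsS_legal R rho : (forall c, legal (rho c)) -> legal (rsS R rho).
Proof. intros H h c He Hx. unfold rsS. destruct lastidx; [apply H; auto|apply fb_legal; auto]. Qed.

Lemma rsS_eq R rho pi i j : j <= i -> R (pi j) -> (forall k, j < k <= i -> ~ R (pi k)) ->
  rsS R rho (ghist pi i) (pi i) = rho (pi j) (ghist (shift pi j) (i - j)) (shift pi j (i - j)).
Proof.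
  intros Hj HR Hn. unfold rsS. rewrite <- ghist_S. unfold ghist at 1.
  rewrite (li_some _ _ 0 (S i) j); auto; try lia.
  - rewrite nth_ghist by lia. rewrite drop_ghist by lia. unfold shift at 3. f_equal. f_equal. lia.
  - intros k Hk. apply Hn; lia.
Qed.

Lemma rs_cons R rho pi n j : gcons (rsS R rho) pi n -> j <= n -> R (pi j) ->
  (forall k, j < k < n -> ~ R (pi k)) -> gcons (rho (pi j)) (shift pi j) (n - j).
Proof.
  intros [H1 H2] Hj HR Hn. split; intros i Hi.
  - unfold shift. replace (j + S i) with (S (j + i)) by lia. apply H1; lia.
  - intros He. unfold shift at 1. replace (j + S i) with (S (j + i)) by lia.
    rewrite H2 by (auto; lia). rewrite (rsS_eq _ _ _ _ j); auto; try lia.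
    + replace (j + i - j) with i by lia. reflexivity.
    + intros k Hk; apply Hn; lia.
Qed.

Lemma rs_icons R rho pi j : icons (rsS R rho) pi -> R (pi j) ->
  (forall k, j < k -> ~ R (pi k)) -> icons (rho (pi j)) (shift pi j).
Proof.
  intros [H1 H2] HR Hn. split; intros i.
  - unfold shift. replace (j + S i) with (S (j + i)) by lia. apply H1.
  - intros He. unfold shift at 1. replace (j + S i) with (S (j + i)) by lia.
    rewrite H2 by auto. rewrite (rsS_eq _ _ _ _ j); auto; try lia.
    + replace (j + i - j) with i by lia. reflexivity.
    + intros k Hk; apply Hn; lia.
Qed.

Lemma good_restart T1 Ok1 T2 Ok2 (R : C -> Prop) :
  (forall c, T1 c -> T2 c) -> (forall c, R c -> ~ T1 c) ->
  (forall c, R c -> exists c', mv c c') ->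
  (forall c c', R c -> mv c c' -> Good T2 Ok2 c') ->
  (forall c, T2 c -> Ok2 c -> (T1 c /\ Ok1 c) \/ R c) ->
  (forall pi, R (pi 0) -> (forall i, mv (pi i) (pi (S i))) -> (forall i, ~ T1 (pi i)) ->
      (forall N, exists n, N <= n /\ R (pi n)) -> infwin pi) ->
  forall c0, R c0 -> Good T1 Ok1 c0.
Proof.
  intros Hsub HRT HRm HRg HOk Hinf c0 Hc0.
  set (rho := fun c => afterS c (fb [] c) (pick T2 Ok2)).
  assert (Hrl : forall c, legal (rho c)).
  { intros c. apply afterS_legal; [intros; apply fb_legal; auto|]. intros c'; exact (proj1 (pick_spec T2 Ok2 c')). }
  exists (rsS R rho).
  assert (Hseg : forall pi n j, gcons (rsS R rho) pi n -> j < n -> R (pi j) ->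
     (forall k, j < k < n -> ~ R (pi k)) ->
     gcons (pick T2 Ok2 (pi (S j))) (shift pi (S j)) (n - S j) /\ wins T2 Ok2 (pick T2 Ok2 (pi (S j))) (pi (S j))).
  { intros pi n j Hc Hj HR Hn. split.
    - pose proof (rs_cons R rho pi n j Hc (Nat.lt_le_incl _ _ Hj) HR Hn) as H.
      replace (n - j) with (S (n - S j)) in H by lia. apply afterS_cons in H.
      rewrite shift_shift in H. replace (j + 1) with (S j) in H by lia.
      unfold shift at 1 in H. replace (j + 1) with (S j) in H by lia. exact H.
    - apply (proj2 (pick_spec T2 Ok2 (pi (S j)))). apply (HRg (pi j)); auto. apply (proj1 Hc); auto. }
  assert (Hiseg : forall pi j, icons (rsS R rho) pi -> R (pi j) ->
     (forall k, j < k -> ~ R (pi k)) ->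
     icons (pick T2 Ok2 (pi (S j))) (shift pi (S j)) /\ wins T2 Ok2 (pick T2 Ok2 (pi (S j))) (pi (S j))).
  { intros pi j Hc HR Hn. split.
    - pose proof (rs_icons R rho pi j Hc HR Hn) as H. apply afterS_icons in H.
      rewrite shift_shift in H. replace (j + 1) with (S j) in H by lia.
      unfold shift at 1 in H. replace (j + 1) with (S j) in H by lia. exact H.
    - apply (proj2 (pick_spec T2 Ok2 (pi (S j)))). apply (HRg (pi j)); auto. apply (proj1 Hc); auto. }
  split; [|split; [|split]].
  - apply rsS_legal; auto.
  - intros pi n H0 Hc Hn HTn.
    destruct (last_idx (fun i => R (pi i)) n) as [j [Hjn [HRj Hl]]]; [congruence|].
    assert (Hjn' : j < n).
    { destruct (Nat.eq_dec j n); [subst; exfalso; apply (HRT _ HRj); auto|lia]. }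
    destruct (Hseg pi n j Hc Hjn' HRj) as [Hc2 [_ [W _]]]; [intros; apply Hl; lia|].
    destruct (min_idx (fun i => T2 (shift pi (S j) i)) (n - S j)) as [m [HTm [Hmn Hmin]]].
    { unfold shift. replace (S j + (n - S j)) with n by lia. auto. }
    assert (Hcm : gcons (pick T2 Ok2 (pi (S j))) (shift pi (S j)) m).
    { destruct Hc2 as [A B]; split; intros; [apply A|apply B]; auto; lia. }
    specialize (W (shift pi (S j)) m (shift0 _ _) Hcm Hmin HTm).
    destruct (HOk _ HTm W) as [[HT1 HO1]|HR1]; unfold shift in *.
    + destruct (Nat.eq_dec (S j + m) n) as [E|E]; [rewrite <- E; auto|].
      exfalso; apply (Hn (S j + m)); auto; lia.
    + exfalso; apply (Hl (S j + m)); auto; lia.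
  - intros pi n H0 Hc Hn Hmv.
    destruct (last_idx (fun i => R (pi i)) n) as [j [Hjn [HRj Hl]]]; [congruence|].
    assert (Hjn' : j < n).
    { destruct (Nat.eq_dec j n); [subst; exfalso|lia]. destruct (HRm _ HRj) as [c' Hc']. apply (Hmv c'); auto. }
    destruct (Hseg pi n j Hc Hjn' HRj) as [Hc2 [_ [W1 [W _]]]]; [intros; apply Hl; lia|].
    assert (HnT2 : forall i, i <= n - S j -> ~ T2 (shift pi (S j) i)).
    { intros i Hi HT.
      destruct (min_idx (fun i => T2 (shift pi (S j) i)) i) as [m [HTm [Hmn Hmin]]]; auto.
      assert (Hcm : gcons (pick T2 Ok2 (pi (S j))) (shift pi (S j)) m).
      { destruct Hc2 as [A B]; split; intros; [apply A|apply B]; auto; lia. }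
      specialize (W1 (shift pi (S j)) m (shift0 _ _) Hcm Hmin HTm).
      destruct (HOk _ HTm W1) as [[HT1 HO1]|HR1]; unfold shift in *.
      + apply (Hn (S j + m)); auto; lia.
      + apply (Hl (S j + m)); auto; lia. }
    specialize (W (shift pi (S j)) (n - S j) (shift0 _ _) Hc2 HnT2).
    unfold shift in W. replace (S j + (n - S j)) with n in W by lia. apply W; auto.
  - intros pi H0 Hc Hn.
    destruct (classic (forall N, exists n, N <= n /\ R (pi n))) as [Hio|Hnio].
    + apply Hinf; auto. congruence. apply (proj1 Hc).
    + apply not_all_ex_not in Hnio. destruct Hnio as [N HN].
      assert (HN' : forall n, N <= n -> ~ R (pi n)) by (intros n Hn1 HR; apply HN; eauto).
      destruct (last_idx (fun i => R (pi i)) N) as [j [Hjn [HRj Hl]]]; [congruence|].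
      assert (Hl' : forall k, j < k -> ~ R (pi k)).
      { intros k Hk. destruct (le_lt_dec k N); [apply Hl; lia|apply HN'; lia]. }
      destruct (Hiseg pi j Hc HRj Hl') as [Hc2 [_ [W1 [_ W]]]].
      assert (HnT2 : forall i, ~ T2 (shift pi (S j) i)).
      { intros i HT.
        destruct (min_idx (fun i => T2 (shift pi (S j) i)) i) as [m [HTm [Hmn Hmin]]]; auto.
        specialize (W1 (shift pi (S j)) m (shift0 _ _) (icons_gcons _ _ _ Hc2) Hmin HTm).
        destruct (HOk _ HTm W1) as [[HT1 HO1]|HR1]; unfold shift in *.
        + apply (Hn (S j + m)); auto.
        + apply (Hl' (S j + m)); auto; lia. }
      apply (infwin_tail pi (S j)). apply (W (shift pi (S j))); auto. apply shift0.
Qed.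

End Game.

Section Forms.
Variable L : Type.

Lemma form_children_ind (P : form L -> Prop) :
  (forall y, (forall c, In c (children y) -> P c) -> P y) -> forall y, P y.
Proof.
  intros H y. induction y; apply H; simpl; intros c Hc; intuition subst; auto.
Qed.

Lemma children_bv (y c : form L) : In c (children y) -> exists l1 l2, bv y = l1 ++ bv c ++ l2.
Proof.
  destruct y; simpl; intros Hc; intuition subst;
  first [exists [], []; rewrite app_nil_r; reflexivity | eexists [], _; reflexivity
        | eexists _, []; rewrite app_nil_r; reflexivity | eexists [_], []; rewrite app_nil_r; reflexivity].
Qed.

Lemma bv_sub (x y : form L) : subf x y -> exists l1 l2, bv y = l1 ++ bv x ++ l2.
Proof.
  induction 1.
  - exists [], []; rewrite app_nil_r; reflexivity.
  - destruct IHsubf as [l1 [l2 E]]. destruct (children_bv _ _ H) as [m1 [m2 E2]].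
    exists (m1 ++ l1), (l2 ++ m2). rewrite E2, E. rewrite !app_assoc. reflexivity.
Qed.

Lemma in_bv_sub (x y : form L) Z : subf x y -> In Z (bv x) -> In Z (bv y).
Proof.
  intros H HZ. destruct (bv_sub _ _ H) as [l1 [l2 E]]. rewrite E.
  apply in_or_app; right; apply in_or_app; left; auto.
Qed.

Lemma nodup_sub (x y : form L) : subf x y -> NoDup (bv y) -> NoDup (bv x).
Proof.
  intros H HN. destruct (bv_sub _ _ H) as [l1 [l2 E]]. rewrite E in HN.
  apply NoDup_app_remove_l in HN. apply NoDup_app_remove_r in HN. auto.
Qed.

Lemma subf_trans (a b c : form L) : subf a b -> subf b c -> subf a c.
Proof.
  intros H1 H2. induction H2; auto. eapply subf_step; eauto.
Qed.

Lemma subf_ch (c y : form L) : In c (children y) -> subf c y.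
Proof. intros H. eapply subf_step; eauto. constructor. Qed.

Definition isb (Z : nat) (X : form L) := exists B, X = fmu Z B \/ X = fnu Z B.

Lemma bv_in_child Z (x : form L) : In Z (bv x) -> isb Z x \/ exists c, In c (children x) /\ In Z (bv c).
Proof.
  destruct x; simpl; intros H;
  try solve [right; eexists; split; [left; reflexivity|auto]];
  try solve [contradiction].
  - apply in_app_or in H. destruct H; right; [exists x1|exists x2]; simpl; auto.
  - apply in_app_or in H. destruct H; right; [exists x1|exists x2]; simpl; auto.
  - destruct H; [subst; left; eexists; eauto|right; eexists; split; [left; reflexivity|auto]].
  - destruct H; [subst; left; eexists; eauto|right; eexists; split; [left; reflexivity|auto]].
Qed.

Lemma binder_exists Z (x : form L) : In Z (bv x) -> exists X, subf X x /\ isb Z X.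
Proof.
  revert x. apply (form_children_ind (fun x => In Z (bv x) -> exists X, subf X x /\ isb Z X)).
  intros y IH H. destruct (bv_in_child Z y H) as [Hb|[c [Hc HZ]]].
  - exists y; split; auto. constructor.
  - destruct (IH c Hc HZ) as [X [HX HbX]]. exists X; split; auto. eapply subf_step; eauto.
Qed.

Lemma isb_bv Z (X : form L) : isb Z X -> In Z (bv X).
Proof. intros [B [E|E]]; subst; simpl; auto. Qed.

Lemma nodup_two (l1 l2 : list nat) x : NoDup (l1 ++ l2) -> In x l1 -> In x l2 -> False.
Proof.
  induction l1; simpl; intros H H1 H2; auto.
  inversion H; subst. destruct H1; [subst|eauto].
  apply H4. apply in_or_app; auto.
Qed.

Lemma children_same Z (y c c' : form L) : In c (children y) -> In c' (children y) ->
  NoDup (bv y) -> In Z (bv c) -> In Z (bv c') -> c = c'.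
Proof.
  destruct y; simpl; intros H1 H2 HN HZ HZ'; intuition subst; auto;
  exfalso; eapply nodup_two; eauto.
Qed.

Lemma binder_root Z (y c : form L) : isb Z y -> In c (children y) -> In Z (bv c) -> NoDup (bv y) -> False.
Proof.
  intros [B [E|E]] Hc HZ HN; subst; simpl in *; destruct Hc as [Hc|[]]; subst;
  inversion HN; auto.
Qed.

Lemma subf_inv (X y : form L) : subf X y -> X = y \/ exists c, In c (children y) /\ subf X c.
Proof. intros H; inversion H; subst; eauto. Qed.

Lemma binder_unique Z (y : form L) : NoDup (bv y) -> forall X X', subf X y -> subf X' y ->
  isb Z X -> isb Z X' -> X = X'.
Proof.
  revert y. apply (form_children_ind (fun y => NoDup (bv y) -> forall X X', subf X y -> subf X' y ->
    isb Z X -> isb Z X' -> X = X')).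
  intros y IH HN X X' H1 H2 Hb1 Hb2.
  destruct (subf_inv _ _ H1) as [E1|[c [Hc Hs]]]; destruct (subf_inv _ _ H2) as [E2|[c' [Hc' Hs']]].
  - congruence.
  - subst X. exfalso. eapply (binder_root Z y c'); eauto. eapply in_bv_sub; eauto. apply isb_bv; auto.
  - subst X'. exfalso. eapply (binder_root Z y c); eauto. eapply in_bv_sub; eauto. apply isb_bv; auto.
  - assert (c = c').
    { eapply (children_same Z y); eauto; eapply in_bv_sub; eauto; apply isb_bv; auto. }
    subst. eapply IH; eauto. destruct (children_bv _ _ Hc') as [l1 [l2 E]]. rewrite E in HN.
    apply NoDup_app_remove_l in HN. apply NoDup_app_remove_r in HN. auto.
Qed.

Lemma occurs_free_child Y (y c : form L) : In c (children y) -> occurs_free Y c -> ~ In Y (bv y) -> occurs_free Y y.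
Proof.
  destruct y; simpl; intros Hc Ho Hn; intuition subst; auto.
Qed.

Lemma free_notbound Y (x : form L) : subf (fvar Y) x -> ~ In Y (bv x) -> occurs_free Y x.
Proof.
  induction 1; intros Hn.
  - simpl; reflexivity.
  - apply (occurs_free_child Y phi c); auto. apply IHsubf.
    intros HY. apply Hn. destruct (children_bv _ _ H) as [l1 [l2 E]]. rewrite E.
    apply in_or_app; right; apply in_or_app; left; auto.
Qed.

End Forms.

Section Main.
Variable M : TS.
Variable V : nat -> Proc M -> Prop.
Variable phi : form (Lab M).
Hypothesis Hpnf : pnf phi.

Definition Cf := conf M.
Definition mvp : Cf -> Cf -> Prop := move phi.
Definition evep : Cf -> Prop := @eve_pos M.
Definition endw : Cf -> Prop := eve_wins_end V.
Definition infw : (nat -> Cf) -> Prop := eve_wins_inf phi.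

Lemma inf_often_tail (pi : nat -> Cf) k Y : inf_often pi Y <-> inf_often (fun i => pi (k + i)) Y.
Proof.
  split; intros H N.
  - destruct (H (N + k)) as [n [Hn E]]. exists (n - k). split; [lia|]. replace (k + (n - k)) with n by lia. auto.
  - destruct (H N) as [n [Hn E]]. exists (k + n). split; [lia|auto].
Qed.

Lemma infw_tail : forall pi k, infw (fun i => pi (k + i)) -> infw pi.
Proof.
  intros pi k [Z [psi [H1 [H2 H3]]]]. exists Z, psi. split; [|split; auto].
  - apply (inf_often_tail pi k); auto.
  - intros Y HY. apply H3. apply inf_often_tail; auto.
Qed.

Definition TSt (S : nat -> Prop) (c : Cf) := exists Y, snd c = fvar Y /\ S Y.
Definition OkE (E : nat -> Proc M -> Prop) (c : Cf) := exists Y, snd c = fvar Y /\ E Y (fst c).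
Definition GoodP S E c := Good Cf mvp evep endw infw (TSt S) (OkE E) c.
Definition agree (E : nat -> Proc M -> Prop) := forall Y H, ~ In Y (bv phi) -> (E Y H <-> V Y H).

Lemma ND : NoDup (bv phi).
Proof. apply Hpnf. Qed.

Lemma var_bound H Y c' : move phi (H, fvar Y) c' -> In Y (bv phi).
Proof.
  simpl. intros [B [[Hs|Hs] _]]; eapply in_bv_sub; eauto; simpl; auto.
Qed.

Lemma mu_move H Z a c' : subf (fmu Z a) phi -> move phi (H, fvar Z) c' -> c' = (H, a).
Proof.
  intros Hs. simpl. intros [B [Hb E]]. subst.
  assert (Hq : fmu Z B = fmu Z a \/ fnu Z B = fmu Z a).
  { destruct Hb as [Hb|Hb]; [left|right]; eapply binder_unique; eauto using ND;
    eexists; eauto. }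
  destruct Hq as [Hq|Hq]; inversion Hq; auto.
Qed.

Lemma nu_move H Z a c' : subf (fnu Z a) phi -> move phi (H, fvar Z) c' -> c' = (H, a).
Proof.
  intros Hs. simpl. intros [B [Hb E]]. subst.
  assert (Hq : fmu Z B = fnu Z a \/ fnu Z B = fnu Z a).
  { destruct Hb as [Hb|Hb]; [left|right]; eapply binder_unique; eauto using ND;
    eexists; eauto. }
  destruct Hq as [Hq|Hq]; inversion Hq; auto.
Qed.

Lemma agree_upd E Z Q : agree E -> In Z (bv phi) -> agree (upd E Z Q).
Proof.
  intros HA HZ Y H HY. unfold upd. destruct (Nat.eqb_spec Y Z); [subst; tauto|]. apply HA; auto.
Qed.

Lemma sub_child (X c : form (Lab M)) : subf X phi -> In c (children X) -> subf c phi.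
Proof. intros H Hc. eapply subf_trans; eauto. apply subf_ch; auto. Qed.

(* invariant for the nu case *)
Definition inv (psi b : form (Lab M)) := subf b psi \/ exists Y, b = fvar Y /\ In Y (bv psi).

Lemma var_in_psi psi H Y c' : subf psi phi -> In Y (bv psi) -> move phi (H, fvar Y) c' -> subf (snd c') psi.
Proof.
  intros Hs HY Hm. destruct (binder_exists _ _ _ HY) as [X [HX Hb]].
  simpl in Hm. destruct Hm as [B [Hb' E]]. subst c'. simpl.
  assert (HXe : X = fmu Y B \/ X = fnu Y B).
  { destruct Hb' as [Hb'|Hb']; [left|right];
    (apply (binder_unique _ Y phi ND); [eapply subf_trans; eauto | exact Hb' | auto | eexists; eauto]). }
  destruct HXe; subst X; eapply subf_trans; eauto; apply subf_ch; simpl; auto.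
Qed.

Lemma closure psi S H b c' : subf psi phi ->
  (forall Y, In Y (bv phi) -> occurs_free Y psi -> S Y) ->
  inv psi b -> ~ TSt S (H, b) -> move phi (H, b) c' -> inv psi (snd c').
Proof.
  intros Hs HS Hi HT Hm. destruct Hi as [Hb|[Y [E HY]]].
  - pose proof Hm as Hm0. destruct b; simpl in Hm.
    + left. apply (var_in_psi psi H Z c' Hs); [|exact Hm0].
      destruct (classic (In Z (bv psi))) as [|Hn]; auto. exfalso. apply HT.
      exists Z; split; auto. apply HS. eapply var_bound; eauto. apply free_notbound; auto.
    + contradiction.
    + left; destruct Hm as [E|E]; subst; simpl; eapply subf_trans; eauto; apply subf_ch; simpl; auto.
    + left; destruct Hm as [E|E]; subst; simpl; eapply subf_trans; eauto; apply subf_ch; simpl; auto.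
    + left; destruct Hm as [r [hr [_ [_ [_ E]]]]]; subst; simpl; eapply subf_trans; eauto; apply subf_ch; simpl; auto.
    + left; destruct Hm as [r [hr [_ [_ [_ E]]]]]; subst; simpl; eapply subf_trans; eauto; apply subf_ch; simpl; auto.
    + left; destruct Hm as [r [hr [_ [_ [_ E]]]]]; subst; simpl; eapply subf_trans; eauto; apply subf_ch; simpl; auto.
    + left; destruct Hm as [r [hr [_ [_ [_ E]]]]]; subst; simpl; eapply subf_trans; eauto; apply subf_ch; simpl; auto.
    + left; destruct Hm as [H' [_ [_ E]]]; subst; simpl; eapply subf_trans; eauto; apply subf_ch; simpl; auto.
    + left; destruct Hm as [H' [_ [_ E]]]; subst; simpl; eapply subf_trans; eauto; apply subf_ch; simpl; auto.
    + right. subst c'. simpl. eexists; split; eauto. eapply in_bv_sub; eauto. simpl; auto.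
    + right. subst c'. simpl. eexists; split; eauto. eapply in_bv_sub; eauto. simpl; auto.
  - subst b. left. eapply var_in_psi; eauto.
Qed.

Lemma gstep S E c0 : ~ TSt S c0 -> (evep c0 -> exists c1, mvp c0 c1 /\ GoodP S E c1) ->
  (~ evep c0 -> forall c1, mvp c0 c1 -> GoodP S E c1) -> ((forall c', ~ mvp c0 c') -> endw c0) ->
  GoodP S E c0.
Proof. apply good_step. apply infw_tail. Qed.

Lemma gtgt S E c0 : TSt S c0 -> OkE E c0 -> GoodP S E c0.
Proof. apply good_tgt. Qed.


Lemma gswitch S1 E1 S2 E2 c0 : (forall c, TSt S1 c -> TSt S2 c) -> GoodP S2 E2 c0 ->
  (forall c, TSt S2 c -> OkE E2 c -> GoodP S1 E1 c) -> GoodP S1 E1 c0.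
Proof. apply good_switch. apply infw_tail. Qed.

Lemma grestart S1 E1 S2 E2 (R : Cf -> Prop) :
  (forall c, TSt S1 c -> TSt S2 c) -> (forall c, R c -> ~ TSt S1 c) ->
  (forall c, R c -> exists c', mvp c c') ->
  (forall c c', R c -> mvp c c' -> GoodP S2 E2 c') ->
  (forall c, TSt S2 c -> OkE E2 c -> (TSt S1 c /\ OkE E1 c) \/ R c) ->
  (forall pi, R (pi 0) -> (forall i, mvp (pi i) (pi (S i))) -> (forall i, ~ TSt S1 (pi i)) ->
      (forall N, exists n, N <= n /\ R (pi n)) -> infw pi) ->
  forall c0, R c0 -> GoodP S1 E1 c0.
Proof. apply good_restart. apply infw_tail. Qed.

Ltac nott := let Y := fresh in let E1 := fresh in intros [Y [E1 _]]; simpl in E1; discriminate E1.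

Lemma mainL : forall psi, subf psi phi -> forall S E, agree E ->
  (forall Y, In Y (bv phi) -> occurs_free Y psi -> S Y) ->
  (forall Y, S Y -> ~ In Y (bv psi)) ->
  forall H, sem E psi H -> GoodP S E (H, psi).
Proof.
  induction psi; intros Hs S E HA HS1 HS2 H Hsem; simpl in Hsem.
  -
    destruct (classic (S Z)) as [HSZ|HSZ].
    + apply gtgt; exists Z; simpl; auto.
    + assert (HnZ : ~ In Z (bv phi)) by (intro HZ; apply HSZ; apply HS1; simpl; auto).
      apply gstep.
      * intros [Y [E1 HY]]. simpl in E1. inversion E1; subst; auto.
      * unfold evep; simpl; intros [].
      * intros _ c1 Hm. exfalso; apply HnZ; eapply var_bound; eauto.
      * intros _. unfold endw; simpl. apply HA; auto.
  -
    destruct (proj1 Hpnf psi Hs) as [Y EY]; subst psi. simpl in Hsem.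
    assert (HnY : ~ In Y (bv phi)) by (intro HY; apply (proj2 (proj2 (proj2 Hpnf) Y HY)); auto).
    apply gstep.
    + nott.
    + unfold evep; simpl; intros [].
    + intros _ c1 [].
    + intros _. unfold endw; simpl. intro HV; apply Hsem; apply HA; auto.
  -
    destruct Hsem as [Ha Hb]. apply gstep.
    + nott.
    + unfold evep; simpl; intros [].
    + intros _ c1 [E1|E1]; subst.
      * apply IHpsi1; auto. apply (sub_child _ _ Hs); simpl; auto.
        intros Y HY Ho; apply HS1; simpl; auto.
        intros Y HY Hin; apply (HS2 Y HY); simpl; apply in_or_app; auto.
      * apply IHpsi2; auto. apply (sub_child _ _ Hs); simpl; auto.
        intros Y HY Ho; apply HS1; simpl; auto.
        intros Y HY Hin; apply (HS2 Y HY); simpl; apply in_or_app; auto.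
    + intros Hn; exfalso; apply (Hn (H, psi1)); simpl; auto.
  -
    apply gstep.
    + nott.
    + intros _. destruct (classic (sem E psi1 H)) as [Ha|Ha].
      * exists (H, psi1). split; [simpl; auto|]. apply IHpsi1; auto. apply (sub_child _ _ Hs); simpl; auto.
        intros Y HY Ho; apply HS1; simpl; auto.
        intros Y HY Hin; apply (HS2 Y HY); simpl; apply in_or_app; auto.
      * exists (H, psi2). split; [simpl; auto|]. apply IHpsi2; auto. apply (sub_child _ _ Hs); simpl; auto.
        intros Y HY Ho; apply HS1; simpl; auto.
        intros Y HY Hin; apply (HS2 Y HY); simpl; apply in_or_app; auto.
        apply NNPP; intro Hb; apply Hsem; auto.
    + intros Hne; exfalso; apply Hne; unfold evep, eve_pos; simpl; auto.
    + intros Hn; exfalso; apply (Hn (H, psi1)); simpl; auto.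
  -
    destruct Hsem as [r [hr [Hr [Hl [Hle Ha]]]]]. apply gstep.
    + nott.
    + intros _. exists (succP r hr, psi). split; [simpl; exists r, hr; auto|].
      apply IHpsi; auto. apply (sub_child _ _ Hs); simpl; auto.
    + intros Hne; exfalso; apply Hne; unfold evep, eve_pos; simpl; auto.
    + intros Hn; exfalso; apply (Hn (succP r hr, psi)); simpl; exists r, hr; auto.
  -
    apply gstep.
    + nott.
    + unfold evep; simpl; intros [].
    + intros _ c1 [r [hr [Hr [Hl [Hle E1]]]]]; subst c1. apply IHpsi; auto.
      apply (sub_child _ _ Hs); simpl; auto.
      apply NNPP; intro Hn; apply Hsem; exists r, hr; auto.
    + intros _; unfold endw; simpl; auto.
  -
    destruct Hsem as [r [hr [Hr [Hl [Hle Ha]]]]]. apply gstep.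
    + nott.
    + intros _. exists (succP r hr, psi). split; [simpl; exists r, hr; auto|].
      apply IHpsi; auto. apply (sub_child _ _ Hs); simpl; auto.
    + intros Hne; exfalso; apply Hne; unfold evep, eve_pos; simpl; auto.
    + intros Hn; exfalso; apply (Hn (succP r hr, psi)); simpl; exists r, hr; auto.
  -
    apply gstep.
    + nott.
    + unfold evep; simpl; intros [].
    + intros _ c1 [r [hr [Hr [Hl [Hle E1]]]]]; subst c1. apply IHpsi; auto.
      apply (sub_child _ _ Hs); simpl; auto.
      apply NNPP; intro Hn; apply Hsem; exists r, hr; auto.
    + intros _; unfold endw; simpl; auto.
  -
    destruct Hsem as [H' [Ht [Hq Ha]]]. apply gstep.
    + nott.
    + intros _. exists (H', psi). split; [simpl; exists H'; auto|].
      apply IHpsi; auto. apply (sub_child _ _ Hs); simpl; auto.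
    + intros Hne; exfalso; apply Hne; unfold evep, eve_pos; simpl; auto.
    + intros Hn; exfalso; apply (Hn (H', psi)); simpl; exists H'; auto.
  -
    apply gstep.
    + nott.
    + unfold evep; simpl; intros [].
    + intros _ c1 [H' [Ht [Hq E1]]]; subst c1. apply IHpsi; auto.
      apply (sub_child _ _ Hs); simpl; auto.
      apply NNPP; intro Hn; apply Hsem; exists H'; auto.
    + intros _; unfold endw; simpl; auto.
  -
    assert (HZphi : In Z (bv phi)) by (eapply in_bv_sub; eauto; simpl; auto).
    assert (HSZ : ~ S Z) by (intro HSZ; apply (HS2 Z HSZ); simpl; auto).
    assert (HZa : ~ In Z (bv psi)).
    { pose proof (nodup_sub _ _ _ Hs ND) as HN. simpl in HN. inversion HN; auto. }
    set (W := fun H' => GoodP S E (H', fvar Z)).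
    assert (Hpre : forall H', sem (upd E Z W) psi H' -> W H').
    { intros H' HH'.
      assert (Ga : GoodP (fun Y => S Y \/ Y = Z) (upd E Z W) (H', psi)).
      { apply IHpsi; auto.
        - apply (sub_child _ _ Hs); simpl; auto.
        - apply agree_upd; auto.
        - intros Y HY Ho. destruct (Nat.eq_dec Y Z); auto. left; apply HS1; simpl; auto.
        - intros Y [HY|HY] Hin; [apply (HS2 Y HY); simpl; auto|subst; auto]. }
      assert (Ga' : GoodP S E (H', psi)).
      { apply (gswitch S E (fun Y => S Y \/ Y = Z) (upd E Z W)); auto.
        - intros c [Y [E1 HY]]; exists Y; auto.
        - intros [H'' b] [Y [E1 HY]] [Y' [E2 HY']]. simpl in *. subst b. inversion E2; subst Y'.
          unfold upd in HY'. destruct (Nat.eqb_spec Y Z).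
          + subst Y. exact HY'.
          + apply gtgt; exists Y; simpl; split; auto. destruct HY; [auto|contradiction]. }
      apply gstep.
      - intros [Y [E1 HY]]; simpl in E1; inversion E1; subst; auto.
      - unfold evep; simpl; intros [].
      - intros _ c1 Hm. rewrite (mu_move _ _ _ _ Hs Hm). auto.
      - intros Hn; exfalso; apply (Hn (H', psi)). simpl. exists psi; auto. }
    assert (HW : W H) by (apply Hsem; auto).
    apply gstep.
    + nott.
    + unfold evep; simpl; intros [].
    + intros _ c1 Hm; simpl in Hm; subst c1; auto.
    + intros Hn; exfalso; apply (Hn (H, fvar Z)); simpl; auto.
  -
    assert (HZphi : In Z (bv phi)) by (eapply in_bv_sub; eauto; simpl; auto).
    assert (HSZ : ~ S Z) by (intro HSZ; apply (HS2 Z HSZ); simpl; auto).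
    assert (HZa : ~ In Z (bv psi)).
    { pose proof (nodup_sub _ _ _ Hs ND) as HN. simpl in HN. inversion HN; auto. }
    apply not_all_ex_not in Hsem. destruct Hsem as [Q HQ]. apply imply_to_and in HQ.
    destruct HQ as [HQ HnQ].
    set (P := fun x => ~ Q x).
    assert (Hpost : forall H', P H' -> sem (upd E Z P) psi H').
    { intros H' HP. apply NNPP; intro Hn. apply HP. apply HQ. exact Hn. }
    set (R := fun c : Cf => snd c = fvar Z /\ P (fst c)).
    assert (HG : GoodP S E (H, fvar Z)).
    { apply (grestart S E (fun Y => S Y \/ Y = Z) (upd E Z P) R); [| | | | | | split; simpl; auto].
      - intros c [Y [E1 HY]]; exists Y; auto.
      - intros c [E1 _] [Y [E2 HY]]. rewrite E1 in E2. inversion E2; subst; auto.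
      - intros [H' b] [E1 _]; simpl in E1; subst b. exists (H', psi); simpl. exists psi; auto.
      - intros [H' b] c' [E1 HP] Hm; simpl in E1, HP; subst b. rewrite (nu_move _ _ _ _ Hs Hm).
        apply IHpsi; auto.
        + apply (sub_child _ _ Hs); simpl; auto.
        + apply agree_upd; auto.
        + intros Y HY Ho. destruct (Nat.eq_dec Y Z); auto. left; apply HS1; simpl; auto.
        + intros Y [HY|HY] Hin; [apply (HS2 Y HY); simpl; auto|subst; auto].
      - intros [H'' b] [Y [E1 HY]] [Y' [E2 HY']]. simpl in *. subst b. inversion E2; subst Y'.
        unfold upd in HY'. destruct (Nat.eqb_spec Y Z).
        + right. subst Y. split; simpl; auto.
        + left. destruct HY; [|contradiction]. split; exists Y; auto.
      - intros pi HR0 Hm Hn HRinf.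
        assert (Hinv : forall i, inv (fnu Z psi) (snd (pi i))).
        { induction i.
          - destruct HR0 as [E1 _]. rewrite E1. right. exists Z; simpl; auto.
          - specialize (Hm i). specialize (Hn i). revert IHi Hm Hn. destruct (pi i) as [Hi bi].
            intros IHi Hm Hn. eapply (closure (fnu Z psi) S Hi bi); eauto. }
        exists Z, psi. split; [|split; auto].
        + intros N. destruct (HRinf N) as [n [HnN [E1 _]]]. exists n; auto.
        + intros Y HY. destruct (HY 0) as [n [_ En]].
          assert (HmY : move phi (fst (pi n), fvar Y) (pi (Datatypes.S n))).
          { rewrite <- En. rewrite <- surjective_pairing. apply Hm. }
          pose proof (var_bound _ _ _ HmY) as HYphi.
          assert (HYb : In Y (bv (fnu Z psi))).
          { pose proof (Hinv n) as Hi. rewrite En in Hi. destruct Hi as [Hsb|[Y' [E1 HY']]].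
            - destruct (classic (In Y (bv (fnu Z psi)))) as [|Hnb]; auto. exfalso. apply (Hn n).
              exists Y; split; auto. apply HS1; auto. apply free_notbound; auto.
            - inversion E1; subst; auto. }
          destruct (binder_exists _ _ _ HYb) as [X [HX Hb]]. exists X. split; auto.
          split; [eapply subf_trans; eauto|]. exact Hb. }
    apply gstep.
    + nott.
    + unfold evep; simpl; intros [].
    + intros _ c1 Hm; simpl in Hm; subst c1; auto.
    + intros Hn; exfalso; apply (Hn (H, fvar Z)); simpl; auto.
Qed.

End Main.

Theorem theorem7 (M : TS) (V : nat -> Proc M -> Prop) (phi : form (Lab M)) :
  TSI_axioms M -> image_finite M -> pnf phi ->
  sem V phi (H0 M) ->
  eve_has_winning_strategy V phi (H0 M, phi).
Proof.
  intros _ _ Hp Hsem.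
  destruct (mainL M V phi Hp phi (subf_refl _) (fun _ => False) V) with (H := H0 M)
    as [sg [Hl [W1 [W2 W3]]]]; auto.
  - intros Y H _; tauto.
  - intros Y HY Ho. apply (proj1 (proj2 (proj2 Hp) Y HY)); auto.
  - exists sg. split; [exact Hl|split].
    + intros pi n Hp0 Hm Hc Hmax. apply (W2 pi n Hp0); auto.
      * split; auto.
      * intros i _ [Y [_ []]].
    + intros pi Hp0 Hm Hc. apply (W3 pi Hp0); auto.
      * split; auto.
      * intros i [Y [_ []]].
Qed.
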